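(* Let $\mathcal{C}_1$ be an even-like $[n,k_1,d_1]_2$ binary linear code, let $\mathcal{C}_2$ be the $[n,1,n]_2$ repetition code generated by the all-ones vector, and let $\mathcal{C}=\{(\mathbf{u},\mathbf{u}+\mathbf{v}):\mathbf{u}\in\mathcal{C}_1,\mathbf{v}\in\mathcal{C}_2\}$. Then: 1) $\mathcal{C}$ is a $[2n,k_1+1,\min\{2d_1,n\}]_2$ odd-like code if and only if $\mathcal{C}$ is a binary almost Euclidean self-orthogonal code; 2) $\mathcal{C}$ is a $[2n,k_1+1,\min\{2d_1,n\}]_2$ even-like code if and only if $\mathcal{C}$ is a binary Euclidean self-orthogonal code.
   Context: A binary code is even-like if every codeword has even Hamming weight, and odd-like otherwise. For a binary $[N,k,d]_2$ code $\mathcal{C}$, $\mathrm{Hull}_E(\mathcal{C})=\mathcal{C}\cap\mathcal{C}^{\perp_E}$ with $\perp_E$ the dual under $\sum_ix_iy_i$; $\mathcal{C}$ is Euclidean self-orthogonal if $\dim(\mathrm{Hull}_E(\mathcal{C}))=k$ and almost Euclidean self-orthogonal if $\dim(\mathrm{Hull}_E(\mathcal{C}))=k-1$. *)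

(* Defs.v *)
From HB Require Import structures.
From mathcomp Require Import all_boot all_order all_algebra.
Set Implicit Arguments. Unset Strict Implicit. Unset Printing Implicit Defensive.
Import GRing.Theory.
Local Open Scope ring_scope.

Definition wt (n : nat) (x : 'rV['F_2]_n) : nat := #|[set i | x 0 i != 0]|.

Definition even_like (n : nat) (C : {vspace 'rV['F_2]_n}) : Prop :=
  forall c, c \in C -> ~~ odd (wt c).
Definition odd_like (n : nat) (C : {vspace 'rV['F_2]_n}) : Prop :=
  ~ even_like C.

Definition min_dist (n : nat) (C : {vspace 'rV['F_2]_n}) (d : nat) : Prop :=
  (exists c, [/\ c \in C, c != 0 & wt c = d]) /\
  (forall c, c \in C -> c != 0 -> (d <= wt c)%N).

Definition is_code (n : nat) (C : {vspace 'rV['F_2]_n}) (k d : nat) : Prop :=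
  \dim C = k /\ min_dist C d.

Definition edot (n : nat) (x y : 'rV['F_2]_n) : 'F_2 := \sum_i x 0 i * y 0 i.

Definition edual (n : nat) (C : {vspace 'rV['F_2]_n}) : {vspace 'rV['F_2]_n} :=
  <<enum [set x : 'rV['F_2]_n | [forall y, (y \in C) ==> (edot x y == 0%R)]]>>%VS.

Definition ehull (n : nat) (C : {vspace 'rV['F_2]_n}) : {vspace 'rV['F_2]_n} :=
  (C :&: edual C)%VS.

Definition self_orth (n : nat) (C : {vspace 'rV['F_2]_n}) : Prop :=
  \dim (ehull C) = \dim C.
Definition almost_self_orth (n : nat) (C : {vspace 'rV['F_2]_n}) : Prop :=
  \dim (ehull C) = (\dim C - 1)%N.

Definition rep_code (n : nat) : {vspace 'rV['F_2]_n} := <[const_mx 1]>%VS.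

(* Main.v *)
Require Import Defs.
From HB Require Import structures.
From mathcomp Require Import all_boot all_order all_algebra.
Import GRing.Theory.
Local Open Scope ring_scope.
Lemma F2cases (c : 'F_2) : c = 0 \/ c = 1.
Proof. case: c => [[|[|m]]] //= H; [left|right]; by apply/val_inj. Qed.
Lemma F2b (a : 'F_2) : a = (a != 0)%:R.
Proof. case: (F2cases a) => ->; [by rewrite eqxx | by rewrite oner_eq0]. Qed.
Lemma F2add (a : 'F_2) : a + a = 0.
Proof. case: (F2cases a) => ->; [by rewrite addr0 | by apply/val_inj]. Qed.
Lemma F2nat m : (m%:R : 'F_2) = (odd m)%:R.
Proof. elim: m => // m IH. rewrite mulrSr IH /=. case: (odd m) => /=; [by rewrite F2add | by rewrite add0r]. Qed.
Lemma wtE n (x : 'rV['F_2]_n) : wt x = (\sum_i (x 0%R i != 0%R : nat))%N.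
Proof. rewrite /wt -sum1_card big_mkcond /=; apply: eq_bigr => i _; rewrite inE; by case: (_ != 0). Qed.

Section Aux.
Variable n : nat.
Local Notation one := (const_mx 1 : 'rV['F_2]_n).

Lemma wt_row m (a : 'rV['F_2]_m) (b : 'rV['F_2]_n) : wt (row_mx a b) = (wt a + wt b)%N.
Proof.
rewrite !wtE big_split_ord /=; congr addn; apply: eq_bigr => i _;
  by rewrite ?row_mxEl ?row_mxEr.
Qed.

Lemma wt_comp (u : 'rV['F_2]_n) : (wt u + wt (u + one))%N = n.
Proof.
rewrite !wtE -big_split /= -[n in RHS]card_ord -sum1_card; apply: eq_bigr => i _.
rewrite !mxE; case: (F2cases (u 0 i)) => ->; by rewrite ?add0r ?F2add ?eqxx ?oner_eq0.
Qed.

Lemma wt0 m : wt (0 : 'rV['F_2]_m) = 0%N.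
Proof. by rewrite wtE big1 // => i _; rewrite mxE eqxx. Qed.

Lemma wt1 : wt one = n.
Proof. by have := wt_comp 0; rewrite wt0 add0r add0n. Qed.

Lemma edot_row (a c : 'rV['F_2]_n) (b d : 'rV['F_2]_n) :
  edot (row_mx a b) (row_mx c d) = edot a c + edot b d.
Proof. by rewrite /edot big_split_ord /=; congr (_ + _); apply: eq_bigr => i _; rewrite ?row_mxEl ?row_mxEr. Qed.

Lemma edotDl (x y z : 'rV['F_2]_n) : edot (x + y) z = edot x z + edot y z.
Proof. by rewrite /edot -big_split; apply: eq_bigr => i _; rewrite mxE mulrDl. Qed.
Lemma edotDr (x y z : 'rV['F_2]_n) : edot z (x + y) = edot z x + edot z y.
Proof. by rewrite /edot -big_split; apply: eq_bigr => i _; rewrite mxE mulrDr. Qed.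
Lemma edotZl c (x y : 'rV['F_2]_n) : edot (c *: x) y = c * edot x y.
Proof. by rewrite /edot mulr_sumr; apply: eq_bigr => i _; rewrite mxE mulrA. Qed.
Lemma edotZr c (x y : 'rV['F_2]_n) : edot x (c *: y) = c * edot x y.
Proof. by rewrite /edot mulr_sumr; apply: eq_bigr => i _; rewrite mxE mulrCA. Qed.
Lemma edotC (x y : 'rV['F_2]_n) : edot x y = edot y x.
Proof. by apply: eq_bigr => i _; rewrite mulrC. Qed.
Lemma edot1 (u : 'rV['F_2]_n) : edot u one = (wt u)%:R.
Proof.
rewrite /edot wtE natr_sum; apply: eq_bigr => i _; rewrite mxE mulr1.
exact: F2b.
Qed.

Lemma edot_key (u u' : 'rV['F_2]_n) c c' :
  ~~ odd (wt u) -> ~~ odd (wt u') ->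
  edot (row_mx u (u + c *: one)) (row_mx u' (u' + c' *: one)) = c * c' * n%:R.
Proof.
move=> eu eu'.
have h0 : edot u one = 0 by rewrite edot1 F2nat (negbTE eu).
have h1 : edot one u' = 0 by rewrite edotC edot1 F2nat (negbTE eu').
rewrite edot_row !edotDl !edotDr !edotZl !edotZr h0 h1 edot1 wt1.
by rewrite !mulr0 !addr0 add0r addrA F2add add0r mulrA.
Qed.

Lemma edot_mx m (x y : 'rV['F_2]_m) : edot x y = (x *m y^T) 0 0.
Proof. by rewrite mxE /edot; apply: eq_bigr => i _; rewrite mxE. Qed.

End Aux.

Lemma to_edual m (C : {vspace 'rV['F_2]_m}) x :
  (forall y, y \in C -> edot x y = 0) -> x \in edual C.
Proof.
move=> H; apply: memv_span; rewrite mem_enum inE; apply/forallP => y.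
by apply/implyP => /H ->.
Qed.

Lemma of_edual m (C : {vspace 'rV['F_2]_m}) x y :
  x \in edual C -> y \in C -> edot x y = 0.
Proof.
move=> Hx Hy.
have sub : (edual C <= lker (linfun (mulmxr y^T)))%VS.
  apply/span_subvP => z; rewrite mem_enum inE => /forallP /(_ y).
  rewrite Hy /= => /eqP H; rewrite memv_ker lfunE /=.
  apply/eqP/matrixP => i j; rewrite (ord1 i) (ord1 j) -edot_mx H mxE //.
move/subvP: sub => /(_ x Hx); rewrite memv_ker lfunE /= => /eqP H.
by rewrite edot_mx H mxE.
Qed.

Theorem corollary4 (n k1 d1 : nat) (C1 : {vspace 'rV['F_2]_n})
    (C : {vspace 'rV['F_2]_(n + n)}) :
  even_like C1 -> is_code C1 k1 d1 ->
  (forall w, w \in C <->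
     exists u v, [/\ u \in C1, v \in rep_code n & w = row_mx u (u + v)]) ->
  ((is_code C (k1 + 1) (minn (2 * d1) n) /\ odd_like C) <-> almost_self_orth C) /\
  ((is_code C (k1 + 1) (minn (2 * d1) n) /\ even_like C) <-> self_orth C).
Proof.
move=> ev1 [dim1 [[c1 [c1C c1nz wtc1]] md1]] HC.
have memC w : w \in C <-> exists u c, u \in C1 /\ w = row_mx u (u + c *: const_mx 1).
  split; first by case/HC => u [v [uC /vlineP [c ->] ->]]; exists u, c.
  case=> u [c [uC ->]]; apply/HC; exists u, (c *: const_mx 1); split => //.
  by apply/vlineP; exists c.
have npos : (0 < n)%N.
  case: (posnP n) => // n0; exfalso; move/eqP: c1nz; apply; apply/rowP => i.
  by have := ltn_ord i; rewrite {2}n0.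
pose e : 'rV['F_2]_(n + n) := row_mx 0 (const_mx 1).
have eE : e = row_mx 0 (0 + 1 *: const_mx 1) by rewrite add0r scale1r.
have eC : e \in C by apply/memC; exists 0, 1; rewrite eE mem0v.
have wte : wt e = n by rewrite wt_row wt0 wt1.
have enz : e != 0.
  apply/eqP; rewrite -row_mx0 => /eq_row_mx [_ /rowP /(_ (Ordinal npos))].
  by rewrite !mxE => /eqP; rewrite oner_eq0.
pose M : 'M['F_2]_(n, n + n) := row_mx 1%:M 1%:M.
pose f : 'Hom('rV['F_2]_n, 'rV['F_2]_(n + n)) := linfun (mulmxr M).
have fE u : f u = row_mx u u by rewrite lfunE /= mul_mx_row !mulmx1.
pose D := (f @: C1)%VS.
have CE : C = (D + <[e]>)%VS.
  apply/vspaceP => w; apply/idP/idP.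
    case/memC => u [c [uC ->]].
    have -> : row_mx u (u + c *: const_mx 1) = f u + c *: e.
      by rewrite fE scale_row_mx scaler0 add_row_mx addr0.
    by apply: memv_add; [apply: memv_img | apply/vlineP; exists c].
  case/memv_addP => d [/memv_imgP [u uC ->]] [l /vlineP [c ->] ->].
  apply/memC; exists u, c; split => //.
  by rewrite fE scale_row_mx scaler0 add_row_mx addr0.
have dimC : \dim C = (k1 + 1)%N.
  rewrite CE dimv_disjoint_sum ?dim_vline ?enz ?limg_dim_eq ?dim1 //.
    apply/eqP; rewrite -subv0; apply/subvP => x /memv_capP [_].
    by rewrite memv_ker fE -row_mx0 => /eqP /eq_row_mx [-> _]; rewrite memv0.
  apply/eqP; rewrite -subv0; apply/subvP => x /memv_capP [/memv_imgP [u _ ->] /vlineP [c]].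
  rewrite fE scale_row_mx scaler0 => /eq_row_mx [u0 _].
  by rewrite u0 row_mx0 memv0.
have codeC : is_code C (k1 + 1) (minn (2 * d1) n).
  split => //; split.
    case: (leqP (2 * d1) n) => hd.
      exists (row_mx c1 c1); split.
      - by apply/memC; exists c1, 0; rewrite scale0r addr0.
      - by apply: contra c1nz; rewrite -row_mx0 => /eqP /eq_row_mx [-> _].
      - by rewrite wt_row wtc1 addnn -mul2n.
    by exists e; split.
  move=> w /memC [u [c [uC ->]]] wnz.
  move: wnz; case: (F2cases c) => -> wnz.
    move: wnz; rewrite scale0r addr0 wt_row => wnz.
    have unz : u != 0.
      by apply: contraNneq wnz => ->; rewrite row_mx0.
    have := md1 u uC unz => h.
    by apply: leq_trans (geq_minl _ _) _; rewrite mul2n -addnn leq_add.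
  by rewrite scale1r wt_row wt_comp geq_minr.
have evC : even_like C <-> ~~ odd n.
  split; first by move/(_ e eC); rewrite wte.
  move=> en w /memC [u [c [uC ->]]]; case: (F2cases c) => ->.
    by rewrite scale0r addr0 wt_row addnn odd_double.
  by rewrite scale1r wt_row wt_comp.
have ortho w y : w \in C -> y \in C -> exists c c',
    edot w y = c * c' * n%:R /\ (c = 0 -> w \in D).
  move=> /memC [u [c [uC ->]]] /memC [u' [c' [uC' ->]]].
  exists c, c'; split; first by rewrite edot_key //; [apply: ev1 | apply: ev1].
  by move=> ->; rewrite scale0r addr0 -fE memv_img.
case: (boolP (odd n)) => on.
  have Dhull : (D <= ehull C)%VS.
    apply/subvP => x xD; have xC : x \in C by rewrite CE -[x]addr0 memv_add ?mem0v.
    rewrite memv_cap xC /=; apply: to_edual => y yC.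
    move: xD => /memv_imgP [u uC ->]; rewrite fE.
    have -> : row_mx u u = row_mx u (u + 0 *: const_mx 1) by rewrite scale0r addr0.
    case/memC: yC => u' [c' [uC' ->]].
    by rewrite edot_key ?mul0r //; apply: ev1.
  have eN : e \notin edual C.
    apply/negP => /of_edual /(_ eC); rewrite eE edot_key ?wt0 // F2nat on mul1r.
    by rewrite mul1r => /eqP; rewrite oner_eq0.
  have hle : (\dim (ehull C) <= k1)%N.
    have : (\dim (ehull C) <= \dim C)%N by apply: dimvS; apply: capvSl.
    rewrite dimC addn1 leq_eqVlt ltnS => /orP [/eqP h|//].
    have : ehull C == C by rewrite eqEdim /ehull capvSl dimC addn1 -h leqnn.
    move/eqP => h2; exfalso; move: eN; rewrite -h2 in eC.
    by move: eC; rewrite memv_cap => /andP [_ ->].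
  have hge : (k1 <= \dim (ehull C))%N.
    have : (\dim C <= \dim (ehull C + <[e]>))%N.
      by apply: dimvS; rewrite {1}CE; apply: addvS Dhull (subvv _).
    rewrite dimC => h; rewrite -(leq_add2r 1); apply: leq_trans h _.
    by apply: leq_trans (dimv_add_leqif _ _) _; rewrite dim_vline enz.
  have dh : \dim (ehull C) = k1 by apply/eqP; rewrite eqn_leq hle hge.
  split; split.
  - by move=> _; rewrite /almost_self_orth dh dimC addn1 subn1.
  - by move=> _; split; [exact: codeC | rewrite /odd_like => /evC; rewrite on].
  - by case=> _ /evC; rewrite on.
  - by rewrite /self_orth dh dimC => /eqP; rewrite -{1}[k1]addn0 eqn_add2l.
have CD : (C <= edual C)%VS.
  apply/subvP => w wC; apply: to_edual => y yC.
  case: (ortho w y wC yC) => c [c' [-> _]]; by rewrite F2nat (negbTE on) mulr0.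
have hull : ehull C = C by rewrite /ehull (capv_idPl CD).
split; split.
- by case=> _; rewrite /odd_like => H; exfalso; apply: H; apply/evC.
- by rewrite /almost_self_orth hull dimC addn1 subn1 /= => /eqP; rewrite eqn_leq ltnn.
- by move=> _; rewrite /self_orth hull.
- by move=> _; split; [exact: codeC | apply/evC].
Qed.
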